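(* If $T$ is a tree of order $p\ge 3$, then $\gamma_{[3R]}(T)\le \frac{7p}{4}$.
   Context: For a graph $\Gamma=(V,E)$ and $h:V\to\{0,1,2,3,4\}$, let $AN(v)=\{w\in N(v):h(w)\ge 1\}$, $AN[v]=AN(v)\cup\{v\}$ and $h(S)=\sum_{u\in S}h(u)$. $h$ is a triple Roman dominating function (3RDF) if every $v$ with $h(v)<3$ satisfies $h(AN[v])\ge|AN(v)|+3$. The triple Roman domination number $\gamma_{[3R]}(\Gamma)$ is the minimum weight $h(V)$ of a 3RDF of $\Gamma$. *)

(* Defs.v *)
From mathcomp Require Import all_boot.
Set Implicit Arguments. Unset Strict Implicit. Unset Printing Implicit Defensive.

Definition simple_graph (T : finType) (e : rel T) : Prop :=
  symmetric e /\ irreflexive e.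

Definition connected_graph (T : finType) (e : rel T) : Prop :=
  forall x y : T, connect e x y.

Definition acyclic_graph (T : finType) (e : rel T) : Prop :=
  forall c : seq T, 3 <= size c -> uniq c -> ~~ cycle e c.

Definition is_tree (T : finType) (e : rel T) : Prop :=
  [/\ simple_graph e, connected_graph e & acyclic_graph e].

Definition labelling (T : finType) := {ffun T -> 'I_5}.

Definition hw (T : finType) (h : labelling T) (S : {set T}) : nat :=
  \sum_(u in S) (h u : nat).

Definition AN (T : finType) (e : rel T) (h : labelling T) (v : T) : {set T} :=
  [set w | e v w & 1 <= (h w : nat)].

Definition ANc (T : finType) (e : rel T) (h : labelling T) (v : T) : {set T} :=
  v |: AN e h v.

Definition is3RDF (T : finType) (e : rel T) (h : labelling T) : bool :=
  [forall v, ((h v : nat) < 3) ==> (#|AN e h v| + 3 <= hw h (ANc e h v))].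

Definition weight (T : finType) (h : labelling T) : nat := hw h setT.

(* Triple Roman domination number: minimum weight of a 3RDF.  The constant
   labelling 4 is always a 3RDF, of weight 4|V|, so 4|V| is a valid default. *)
Definition gamma3R (T : finType) (e : rel T) : nat :=
  \big[minn/4 * #|T|]_(h : labelling T | is3RDF e h) weight h.

(* Main.v *)
Require Import Defs.
From mathcomp Require Import all_boot.
From mathcomp Require Import zify.
Set Implicit Arguments. Unset Strict Implicit. Unset Printing Implicit Defensive.

Fixpoint ball (T : finType) (e : rel T) (x : T) (n : nat) : {set T} :=
  match n with
  | 0 => [set x]
  | n'.+1 => ball e x n' :|: [set y | [exists z in ball e x n', e z y]]
  end.
Arguments ball {T}.

Lemma ball_last (T : finType) (e : rel T) (x : T) (p : seq T) :
  path e x p -> last x p \in ball e x (size p).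
Proof.
elim/last_ind: p => [|p z IH]; first by rewrite /= inE.
rewrite rcons_path last_rcons size_rcons => /andP[hp hz].
rewrite /= inE; apply/orP; right; rewrite inE; apply/existsP.
by exists (last x p); rewrite IH.
Qed.

Definition lab (k : nat) (c : bool) : nat :=
  match k with
  | 0 => if c then 4 else 3
  | 1 => 0
  | 2 => 3
  | _ => if c then 0 else 1
  end.

Lemma lab_lt k c : lab k c < 5.
Proof. by case: k => [|[|[|k]]]; case: c. Qed.

Definition hasch (T : finType) (e : rel T) (d : T -> nat) (v : T) : bool :=
  [exists w, e v w && (d w == (d v).+1)].

Definition HL (T : finType) (e : rel T) (d : T -> nat) (r : nat) : labelling T :=
  [ffun v => inord (lab ((d v + r) %% 4) (hasch e d v))].

Lemma HE (T : finType) (e : rel T) (d : T -> nat) r v :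
  (HL e d r v : nat) = lab ((d v + r) %% 4) (hasch e d v).
Proof. by rewrite ffunE inordK // lab_lt. Qed.

Lemma AN_bound (T : finType) (e : rel T) (h : labelling T) v (X : {set T}) :
  irreflexive e -> X \subset AN e h v ->
  #|AN e h v| + h v + \sum_(w in X) (h w - 1) <= hw h (ANc e h v).
Proof.
move=> irr sub; rewrite /hw /ANc big_setU1 /=; last by rewrite inE irr.
have -> : \sum_(u in AN e h v) (h u : nat)
          = \sum_(u in AN e h v) (h u - 1) + #|AN e h v|.
  rewrite -sum1_card -big_split /=; apply: eq_bigr => u.
  by rewrite inE => /andP[_ hu]; rewrite subnK.
have : \sum_(w in X) (h w - 1) <= \sum_(u in AN e h v) (h u - 1).
  rewrite (big_mkcond (fun w => w \in X)) (big_mkcond (fun w => w \in AN e h v)).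
  apply: leq_sum => w _; case: ifP => hX //.
  by rewrite (subsetP sub w hX).
lia.
Qed.

Lemma good2 (T : finType) (e : rel T) (h : labelling T) v a b :
  irreflexive e -> a != b -> e v a -> e v b -> 3 <= h a -> 3 <= h b ->
  #|AN e h v| + 3 <= hw h (ANc e h v).
Proof.
move=> irr ab va vb ha hb.
have sub : [set a; b] \subset AN e h v.
  apply/subsetP => w; rewrite !inE => /orP[]/eqP->; apply/andP; split => //; lia.
have := AN_bound irr sub.
rewrite big_setU1 /=; last by rewrite inE.
rewrite big_set1; lia.
Qed.

Lemma good1 (T : finType) (e : rel T) (h : labelling T) v u :
  irreflexive e -> e v u -> 1 <= h u -> 3 <= h v + (h u - 1) ->
  #|AN e h v| + 3 <= hw h (ANc e h v).
Proof.
move=> irr vu hu hs.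
have sub : [set u] \subset AN e h v.
  by apply/subsetP => w; rewrite !inE => /eqP->; apply/andP; split.
have := AN_bound irr sub.
rewrite big_set1; lia.
Qed.

Lemma HL_ok (T : finType) (e : rel T) (d : T -> nat) (x a b : T) r :
  symmetric e -> irreflexive e -> d x = 0 -> (forall v, d v = 0 -> v = x) ->
  (forall u v, e u v -> d v <= (d u).+1) ->
  (forall v, 0 < d v -> exists u, e v u /\ d u = (d v).-1) ->
  e x a -> e x b -> a != b -> is3RDF e (HL e d r).
Proof.
move=> sym irr dx0 d0 dS dP xa xb ab.
have da : d a = 1.
  have := dS _ _ xa; rewrite dx0 => h1.
  case: (posnP (d a)) => [/d0 ax|]; last by lia.
  by move: xa; rewrite ax irr.
have db : d b = 1.
  have := dS _ _ xb; rewrite dx0 => h1.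
  case: (posnP (d b)) => [/d0 bx|]; last by lia.
  by move: xb; rewrite bx irr.
have hx : hasch e d x by apply/existsP; exists a; rewrite xa da dx0.
apply/forallP => v; apply/implyP; rewrite HE => hv.
have hm : (d v + r) %% 4 < 4 by rewrite ltn_pmod.
have [m1|m3] : (d v + r) %% 4 = 1 \/ (d v + r) %% 4 = 3.
  move: hv hm; case: ((d v + r) %% 4) => [|[|[|[|k]]]] //=; try lia; by case: hasch.
-
  case: (posnP (d v)) => [dv0|dvp].
  + have vx := d0 _ dv0; subst v.
    apply: (good2 irr ab xa xb); rewrite HE.
    * by rewrite da (_ : (1 + r) %% 4 = 2) //; rewrite dx0 in m1; lia.
    * by rewrite db (_ : (1 + r) %% 4 = 2) //; rewrite dx0 in m1; lia.
  + have [u [vu du]] := dP v dvp.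
    have hu : hasch e d u.
      by apply/existsP; exists v; rewrite sym vu du; apply/eqP; lia.
    have ku : (d u + r) %% 4 = 0 by lia.
    by apply: (good1 irr vu); rewrite !HE ?m1 ku hu.
- case hc: (hasch e d v).
  + case: (posnP (d v)) => [dv0|dvp].
    * have vx := d0 _ dv0; subst v.
      apply: (good2 irr ab xa xb); rewrite HE.
      -- rewrite da (_ : (1 + r) %% 4 = 0) /=; last by rewrite dx0 in m3; lia.
         by case: hasch.
      -- rewrite db (_ : (1 + r) %% 4 = 0) /=; last by rewrite dx0 in m3; lia.
         by case: hasch.
    * have [u [vu du]] := dP v dvp.
      move: hc => /existsP [w /andP [vw /eqP dw]].
      have uw : u != w by apply/eqP => uw; subst w; lia.
      apply: (good2 irr uw vu vw); rewrite HE.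
      -- by rewrite (_ : (d u + r) %% 4 = 2) //; lia.
      -- rewrite (_ : (d w + r) %% 4 = 0) /=; last by lia.
         by case: hasch.
  + case: (posnP (d v)) => [dv0|dvp].
    * have vx := d0 _ dv0; subst v; by rewrite hx in hc.
    * have [u [vu du]] := dP v dvp.
      apply: (good1 (u := u) irr vu); rewrite ?HE ?m3 ?hc (_ : (d u + r) %% 4 = 2) //; lia.
Qed.

Lemma bigmin_le (I : eqType) (s : seq I) (P : pred I) (F : I -> nat) c i :
  i \in s -> P i -> \big[minn/c]_(j <- s | P j) F j <= F i.
Proof.
elim: s => // j s IH; rewrite inE big_cons => /orP[/eqP<-|hi] hP.
  by rewrite hP geq_minl.
case: (P j); last exact: IH.
exact: leq_trans (geq_minr _ _) (IH hi hP).
Qed.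

Lemma gamma_le (T : finType) (e : rel T) (h : labelling T) :
  is3RDF e h -> gamma3R e <= weight h.
Proof. by move=> hh; rewrite /gamma3R; apply: bigmin_le => //; exact: mem_index_enum. Qed.

Lemma lab_sum n c :
  lab ((n + 0) %% 4) c + lab ((n + 1) %% 4) c + lab ((n + 2) %% 4) c
  + lab ((n + 3) %% 4) c = 7.
Proof.
rewrite -!(modnDml n).
have : n %% 4 < 4 by rewrite ltn_pmod.
by case: (n %% 4) => [|[|[|[|k]]]] //; case: c.
Qed.

Theorem theorem13 (T : finType) (e : rel T) :
  is_tree e -> 3 <= #|T| -> 4 * gamma3R e <= 7 * #|T|.
Proof.
move=> [[sym irr] conn _] hT.
have [x [a [b [xa [xb ab]]]]] : exists x a b, [/\ e x a, e x b & a != b].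
  case hex: [exists x, exists a, exists b, [&& e x a, e x b & a != b]].
    move/existsP: hex => [x /existsP [a /existsP [b /and3P [h1 h2 h3]]]].
    by exists x, a, b.
  have hno : forall v a b, e v a -> e v b -> a = b.
    move=> v a b va vb; apply/eqP; apply: contraFT hex => nab.
    by apply/existsP; exists v; apply/existsP; exists a; apply/existsP; exists b;
       rewrite va vb nab.
  have /card_gt0P [x _] : 0 < #|T| by lia.
  have [y yx] : exists y, y != x.
    case: (boolP [exists y, y != x]) => [/existsP//|/existsP hn].
    have : #|T| <= #|[set x]|.
      apply: subset_leq_card; apply/subsetP => z _; rewrite inE.
      by apply/negPn/negP => hz; apply: hn; exists z.
    rewrite cards1; lia.
  have /connectP [p hp yl] := conn x y.
  case: p hp yl => [|a p] /=; first by move=> _ yl; rewrite yl eqxx in yx.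
  move=> /andP [xa _] _.
  have key : forall q s, (s == x) || (s == a) -> path e s q ->
      (last s q == x) || (last s q == a).
    elim=> [|c q IH] s //= hs /andP [sc hq]; apply: IH hq.
    case/orP: hs => /eqP hs; subst s.
      by rewrite (hno _ _ _ sc xa) eqxx orbT.
    by rewrite (hno _ _ _ sc (_ : e a x)) ?eqxx // sym.
  have : #|T| <= #|[set x; a]|.
    apply: subset_leq_card; apply/subsetP => z _; rewrite !inE.
    have /connectP [q hq ->] := conn x z.
    by apply: key => //; rewrite eqxx.
  rewrite cards2; lia.
have hex : forall v, exists n, v \in ball e x n.
  move=> v; have /connectP [p hp ->] := conn x v; exists (size p); exact: ball_last.
pose d v := ex_minn (hex v).
have dmin v n : v \in ball e x n -> d v <= n.
  by rewrite /d; case: ex_minnP => m _; apply.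
have dB v : v \in ball e x (d v) by rewrite /d; case: ex_minnP.
have dx0 : d x = 0.
  by apply/eqP; rewrite -leqn0; apply: dmin; rewrite /= inE.
have d0 : forall v, d v = 0 -> v = x.
  by move=> v dv; have := dB v; rewrite dv /= inE => /eqP.
have dS : forall u v, e u v -> d v <= (d u).+1.
  move=> u v uv; apply: dmin; rewrite /= inE; apply/orP; right; rewrite inE.
  by apply/existsP; exists u; rewrite dB uv.
have dP : forall v, 0 < d v -> exists u, e v u /\ d u = (d v).-1.
  move=> v dvp; have := dB v.
  case E: (d v) dvp => [|n] //= _; rewrite inE => /orP [hn|].
    by have := dmin _ _ hn; lia.
  rewrite inE => /existsP [z /andP [hz zv]].
  exists z; split; first by rewrite sym.
  have := dmin _ _ hz; have := dS _ _ zv; lia.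
have ok r := HL_ok r sym irr dx0 d0 dS dP xa xb ab.
have hsum : weight (HL e d 0) + weight (HL e d 1) + weight (HL e d 2)
            + weight (HL e d 3) = 7 * #|T|.
  rewrite /weight /hw -!big_split /=.
  rewrite (eq_bigr (fun _ => 7)); last by move=> v _; rewrite !HE lab_sum.
  by rewrite sum_nat_const cardsT mulnC.
have g0 := gamma_le (ok 0); have g1 := gamma_le (ok 1).
have g2 := gamma_le (ok 2); have g3 := gamma_le (ok 3).
lia.
Qed.
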